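(* Let $\mathcal{L}$ and $\mathcal{L}'$ be lattices and $u,u':\mathbb{N}\to\mathbb{N}$. If $\mathcal{L}$ is $O(u(n))$ and $\mathcal{L}'$ is $O(u'(n))$, then the product lattice $\mathcal{L}\times\mathcal{L}'$ is $O(u(n)u'(n))$.
   Context: A lattice means a partially ordered set $(\mathcal{L},\sqsubseteq)$ with least element $\bot$ in which any two elements have a least upper bound $\sqcup$; $\bigsqcup S$ denotes the least upper bound of a finite set ($\bigsqcup\emptyset=\bot$). The product lattice $\mathcal{L}\times\mathcal{L}'$ has pairs $(\ell,\ell')$ with $\ell\in\mathcal{L},\ell'\in\mathcal{L}'$ ordered componentwise: $(\ell_0,\ell_1)\sqsubseteq(\jmath_0,\jmath_1)$ iff $\ell_0\sqsubseteq\jmath_0$ and $\ell_1\sqsubseteq\jmath_1$. The closure set of a finite $S$ is $C(S)=\{\bigsqcup S' : S'\subseteq S\}$ and $CS_{\mathcal{L}}(n)=\max\{|C(S)| : S\subseteq\mathcal{L}\text{ finite}, |S|\le n\}$. For $f,g:\mathbb{N}\to\mathbb{N}$, $f$ is $O(g)$ iff there exist $N_0\in\mathbb{N}$ and rational $C>0$ with $f(n)\le Cg(n)$ for all $n\ge N_0$. A lattice $\mathcal{L}$ is $O(f(n))$ iff $CS_{\mathcal{L}}(n)$ is $O(f(n))$. *)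

(* Defs.v *)
From HB Require Import structures.
From mathcomp Require Import all_boot all_order all_algebra.
From mathcomp Require Import finmap.
From mathcomp Require Import boolp.
Set Implicit Arguments. Unset Strict Implicit. Unset Printing Implicit Defensive.
Import Order.TTheory GRing.Theory Num.Theory.
Local Open Scope fset_scope.
Local Open Scope order_scope.

(* A lattice in the sense of the paper: a partial order with least element
   \bot in which any two elements have a least upper bound (join):
   a [bJoinSemilatticeType d]. *)

Definition closure_set {d : Order.disp_t} {L : bJoinSemilatticeType d}
  (S : {fset L}) : {fset L} :=
  [fset (\join_(x <- enum_fset S') x) | S' : {fset L} in fpowerset S].

(* CS_L(n) = max { |C(S)| : S finite, |S| <= n }.  Since |C(S)| <= 2^|S| <= 2^n,
   this maximum is taken among the k <= 2^n. *)
Definition CS {d : Order.disp_t} (L : bJoinSemilatticeType d) (n : nat) : nat :=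
  \max_(k < (2 ^ n).+1 |
        `[< exists S : {fset L}, (#|` S| <= n)%N /\ #|` closure_set S| = k >]) k.

Definition bigO (f g : nat -> nat) : Prop :=
  exists (N0 : nat) (C : rat), (0 < C)%R /\
    forall n : nat, (N0 <= n)%N -> ((f n)%:R <= C * (g n)%:R)%R.

Definition lattice_bigO {d : Order.disp_t} (L : bJoinSemilatticeType d)
  (f : nat -> nat) : Prop := bigO (CS L) f.

(* Main.v *)
Require Import Defs.
From HB Require Import structures.
From mathcomp Require Import all_boot all_order all_algebra.
From mathcomp Require Import finmap boolp.

Import Order.TTheory GRing.Theory Num.Theory.

Section Helpers.
Local Open Scope fset_scope.
Local Open Scope order_scope.

Lemma size_enum_finmem (K : choiceType) (A : {fset K}) :
  size (enum_finmem (mem A)) = #|` A|.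
Proof.
apply: perm_size; apply: uniq_perm; rewrite ?enum_finmem_uniq ?fset_uniq // => x.
Qed.

Lemma card_fsetM (K K' : choiceType) (A : {fset K}) (B : {fset K'}) :
  #|` A `*` B| = (#|` A| * #|` B|)%N.
Proof.
rewrite /fsetM.
rewrite (perm_size (enum_imfset2 _ _)); last by move=> [??] [??] _ _ /= [-> ->].
rewrite size_allpairs_dep /=.
have H : forall s : seq K, sumn [seq #|` B| | _ <- s] = (size s * #|` B|)%N.
  by elim=> //= ? ? ->; rewrite mulSn.
exact: H.
Qed.

Lemma card_imfset_le (K K' : choiceType) (f : K -> K') (A : {fset K}) :
  (#|` [fset f x | x in A]| <= #|` A|)%N.
Proof. by rewrite -[X in (_ <= X)%N]size_enum_finmem leq_imfset_card. Qed.

Lemma closure_card_le {d : Order.disp_t} (L : bJoinSemilatticeType d) (S : {fset L}) :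
  (#|` closure_set S| <= 2 ^ #|` S|)%N.
Proof.
rewrite /closure_set -card_fpowerset.
by rewrite -[X in (_ <= X)%N]size_enum_finmem leq_imfset_card.
Qed.

Lemma CS_ge {d : Order.disp_t} (L : bJoinSemilatticeType d) (n : nat) (S : {fset L}) :
  (#|` S| <= n)%N -> (#|` closure_set S| <= CS L n)%N.
Proof.
move=> Sn.
have lt : (#|` closure_set S| < (2 ^ n).+1)%N.
  rewrite ltnS (leq_trans (@closure_card_le _ _ S)) // leq_pexp2l //.
rewrite /CS.
apply: (@leq_bigmax_cond _ _ (fun k : 'I_(2 ^ n).+1 => nat_of_ord k) (Ordinal lt)).
by apply/asboolP; exists S.
Qed.

Lemma CS_le {d : Order.disp_t} (L : bJoinSemilatticeType d) (n m : nat) :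
  (forall S : {fset L}, (#|` S| <= n)%N -> (#|` closure_set S| <= m)%N) ->
  (CS L n <= m)%N.
Proof.
move=> H; rewrite /CS; apply/bigmax_leqP => k /asboolP [S [Sn <-]].
exact: H.
Qed.

Lemma join_fst {d d' : Order.disp_t}
  (L : bJoinSemilatticeType d) (L' : bJoinSemilatticeType d') (s : seq (L *p L')%type) :
  (\join_(p <- s) p).1 = \join_(p <- s) p.1.
Proof. by elim: s => [|a s IH]; rewrite ?big_nil ?big_cons //= IH. Qed.

Lemma join_snd {d d' : Order.disp_t}
  (L : bJoinSemilatticeType d) (L' : bJoinSemilatticeType d') (s : seq (L *p L')%type) :
  (\join_(p <- s) p).2 = \join_(p <- s) p.2.
Proof. by elim: s => [|a s IH]; rewrite ?big_nil ?big_cons //= IH. Qed.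

Lemma join_img {d : Order.disp_t} (L : bJoinSemilatticeType d) (T : choiceType)
  (f : T -> L) (A : {fset T}) :
  \join_(p <- enum_fset A) f p = \join_(y <- enum_fset [fset f x | x in A]) y.
Proof.
apply: le_anti; apply/andP; split.
  apply/joinsP_seq => p pA _; apply: joins_sup_seq => //.
  by apply/imfsetP; exists p.
apply/joinsP_seq => y /imfsetP [p /= pA ->] _.
exact: joins_sup_seq.
Qed.

Lemma closure_prod {d d' : Order.disp_t}
  (L : bJoinSemilatticeType d) (L' : bJoinSemilatticeType d') (S : {fset (L *p L')%type}) :
  closure_set S `<=` closure_set [fset p.1 | p in S] `*` closure_set [fset p.2 | p in S].
Proof.
apply/fsubsetP => x /imfsetP [S' /=]; rewrite fpowersetE => sub ->.
rewrite in_fsetM; apply/andP; split.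
  rewrite join_fst (@join_img _ _ _ (fun p : (L *p L')%type => p.1)).
  apply/imfsetP; exists [fset p.1 | p in S'] => //=.
  rewrite fpowersetE; apply/fsubsetP => y /imfsetP [p /= pS' ->].
  by apply/imfsetP; exists p => //; apply: (fsubsetP sub).
rewrite join_snd (@join_img _ _ _ (fun p : (L *p L')%type => p.2)).
apply/imfsetP; exists [fset p.2 | p in S'] => //=.
rewrite fpowersetE; apply/fsubsetP => y /imfsetP [p /= pS' ->].
by apply/imfsetP; exists p => //; apply: (fsubsetP sub).
Qed.

Lemma CS_prod {d d' : Order.disp_t}
  (L : bJoinSemilatticeType d) (L' : bJoinSemilatticeType d') (n : nat) :
  (CS (L *p L')%type n <= CS L n * CS L' n)%N.
Proof.
apply: CS_le => S Sn.
apply: (leq_trans (fsubset_leq_card (@closure_prod _ _ _ _ S))).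
by rewrite card_fsetM leq_mul // CS_ge // (leq_trans (@card_imfset_le _ _ _ _)).
Qed.

End Helpers.

Theorem mainTheorem3 (d d' : Order.disp_t)
  (L : bJoinSemilatticeType d) (L' : bJoinSemilatticeType d')
  (u u' : nat -> nat) :
  lattice_bigO L u -> lattice_bigO L' u' ->
  lattice_bigO (L *p L')%type (fun n => (u n * u' n)%N).
Proof.
Local Open Scope ring_scope.
move=> [N0 [C [C0 HC]]] [N1 [C' [C'0 HC']]].
exists (maxn N0 N1), (C * C')%R; split; first exact: mulr_gt0.
move=> n; rewrite geq_max => /andP [n0 n1].
apply: (@le_trans _ _ (((CS L n * CS L' n)%N)%:R)).
  by rewrite ler_nat CS_prod.
rewrite !natrM mulrACA.
by apply: ler_pM => //; [exact: HC | exact: HC'].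
Qed.
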